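(* Let $p$ be prime and $A\subset\mathbb{Z}_{p^2}\times\mathbb{Z}_p$ be a spectral set with $\#A>p^2$. Then $A=\mathbb{Z}_{p^2}\times\mathbb{Z}_p$.
   Context: For $b=(b_1,b_2)\in G=\mathbb{Z}_{p^2}\times\mathbb{Z}_p$ let $\chi_b(a_1,a_2)=e^{2\pi i(a_1b_1/p^2+a_2b_2/p)}$. $A\subset G$ is a spectral set if there is $B\subset G$ such that $\{\chi_b|_A:b\in B\}$ is an orthogonal basis of $L^2(A)$ (counting measure). *)

(* Defs.v *)
From HB Require Import structures.
From mathcomp Require Import all_boot all_order all_algebra all_field.
Set Implicit Arguments. Unset Strict Implicit. Unset Printing Implicit Defensive.
Import Order.TTheory GRing.Theory Num.Theory.
Local Open Scope ring_scope.

Definition G (p : nat) : finType := ('Z_(p ^ 2) * 'Z_p)%type.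

(* e^{2 pi i / p^2} in algC: (p^2).-root (-1) is e^{i pi / p^2}. *)
Definition omega (p : nat) : algC := ((p ^ 2)%N.-root (-1)) ^+ 2.

(* chi_b(a) = e^{2 pi i (a1 b1 / p^2 + a2 b2 / p)}
            = omega^(a1 b1 + p a2 b2). *)
Definition chi (p : nat) (b a : G p) : algC :=
  omega p ^+ ((nat_of_ord a.1) * (nat_of_ord b.1)
              + p * ((nat_of_ord a.2) * (nat_of_ord b.2)))%N.

Definition inprodA (p : nat) (A : {set G p}) (f g : G p -> algC) : algC :=
  \sum_(a in A) f a * (g a)^*.

Definition orth_basis_on (p : nat) (A B : {set G p}) : Prop :=
  (forall b b', b \in B -> b' \in B -> b != b' ->
     inprodA A (chi b) (chi b') = 0) /\
  (forall b, b \in B -> inprodA A (chi b) (chi b) != 0) /\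
  (forall f : G p -> algC, exists c : G p -> algC,
     forall a, a \in A -> f a = \sum_(b in B) c b * chi b a).

Definition spectral (p : nat) (A : {set G p}) : Prop :=
  exists B : {set G p}, orth_basis_on A B.

(* Main.v *)
Require Import Defs.
From HB Require Import structures.
From mathcomp Require Import all_boot all_order all_algebra all_field.
From mathcomp Require Import zify.
From Stdlib Require Import Classical.
Set Implicit Arguments. Unset Strict Implicit. Unset Printing Implicit Defensive.
Import GRing.Theory Num.Theory.
Local Open Scope ring_scope.

Definition Fh (p : nat) (A : {set G p}) (x : G p) : algC := \sum_(a in A) chi x a.

Section Basics.
Variable p : nat.
Hypothesis pp : prime p.

Lemma p_gt1 : (1 < p)%N. Proof. exact: prime_gt1. Qed.
Lemma p2_gt1 : (1 < p ^ 2)%N.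
Proof. have := p_gt1 => h; rewrite -mulnn; nia. Qed.
Lemma ZC1 : (Zp_trunc (p ^ 2)).+2 = (p ^ 2)%N. Proof. exact: Zp_cast p2_gt1. Qed.
Lemma ZC2 : (Zp_trunc p).+2 = p. Proof. exact: Zp_cast p_gt1. Qed.

Lemma omega_pow : omega p ^+ (p ^ 2) = 1.
Proof.
rewrite /omega -exprM mulnC exprM rootCK ?expn_gt0 ?prime_gt0 //.
by rewrite sqrrN expr1n.
Qed.

Lemma omega_mod i j : (i = j %[mod p ^ 2])%N -> omega p ^+ i = omega p ^+ j.
Proof.
by move=> e; rewrite -(expr_mod i omega_pow) e (expr_mod j omega_pow).
Qed.

Lemma chiD (b c a : G p) : chi (b + c) a = chi b a * chi c a.
Proof.
rewrite /chi -exprD; apply: omega_mod => /=.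
move: (a.1 : nat) (a.2 : nat) (b.1 : nat) (b.2 : nat) (c.1 : nat) (c.2 : nat).
move=> a1 a2 b1 b2 c1 c2.
rewrite ZC1 ZC2 (mulnCA p a2) (muln_modr p (b2 + c2) p) mulnn.
rewrite -modnDm modnMmr modnMmr modnDm.
by apply: (congr1 (modn^~ _)); nia.
Qed.

Lemma chiC (b a : G p) : chi b a = chi a b.
Proof. by rewrite /chi mulnC (mulnC a.2). Qed.

Lemma chi0 (a : G p) : chi 0 a = 1.
Proof. by rewrite /chi /= !muln0 addn0 expr0. Qed.

Lemma chiDr (b a c : G p) : chi b (a + c) = chi b a * chi b c.
Proof. by rewrite chiC chiD !(chiC b). Qed.

Lemma chiMn (x a : G p) m : chi (x *+ m) a = chi x a ^+ m.
Proof. by elim: m => [|m IH]; rewrite ?chi0 // mulrS chiD IH exprS. Qed.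

Lemma chi_unity (b a : G p) : chi b a ^+ (p ^ 2) = 1.
Proof. by rewrite /chi exprAC omega_pow expr1n. Qed.

Lemma chi_conj (b a : G p) : (chi b a)^* = chi (- b) a.
Proof.
set z := chi b a.
have zN : z * chi (- b) a = 1 by rewrite mulrC -chiD addNr chi0.
have z0 : z != 0.
  by apply/eqP => z0; move: zN; rewrite z0 mul0r => /eqP; rewrite eq_sym oner_eq0.
have nz : `|z| = 1.
  apply/eqP; rewrite -(pexpr_eq1 (n := (p ^ 2)%N)) ?expn_gt0 ?prime_gt0 //.
  by rewrite -normrX chi_unity normr1.
apply: (mulfI z0); rewrite zN -normCK nz expr1n //.
Qed.

Lemma inprodE (A : {set G p}) b c : inprodA A (chi b) (chi c) = Fh A (b - c).
Proof. by apply: eq_bigr => a _; rewrite chi_conj chiD. Qed.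

Lemma galois (A : {set G p}) (x : G p) m :
  coprime m (p ^ 2) -> Fh A (x *+ m) = 0 -> Fh A x = 0.
Proof.
move=> cm h; have [u Hu] := Qn_aut_exists cm.
apply/eqP; rewrite -(fmorph_eq0 u) /Fh rmorph_sum /=.
rewrite (eq_bigr (fun a => chi (x *+ m) a)); first by apply/eqP; exact: h.
move=> a _; by rewrite Hu ?chi_unity // chiMn.
Qed.


Lemma Zq_kill q (y : 'Z_q) : (1 < q)%N -> y *+ q = 0.
Proof. by move=> q1; rewrite -mulr_natr pchar_Zp // mulr0. Qed.

Lemma comp_mulrn (x : G p) m : ((x *+ m).1 = x.1 *+ m) /\ ((x *+ m).2 = x.2 *+ m).
Proof. elim: m => [|m [IH1 IH2]]; first by []. by rewrite !mulrS /= IH1 IH2. Qed.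

Lemma xp2 (x : G p) : x *+ (p ^ 2) = 0.
Proof.
have [h1 h2] := comp_mulrn x (p ^ 2).
have -> : x *+ (p ^ 2) = ((x *+ (p ^ 2)).1, (x *+ (p ^ 2)).2) by case: (x *+ _).
have e : x.2 *+ (p ^ 2) = (x.2 *+ p) *+ p by rewrite -mulrnA mulnn.
rewrite h1 h2 e Zq_kill ?p2_gt1 // Zq_kill ?p_gt1 // mul0rn //.
Qed.

Lemma cop_small m : (0 < m < p)%N -> coprime m (p ^ 2).
Proof.
move=> /andP[m0 mp]; rewrite coprime_sym coprimeXl //.
by rewrite prime_coprime // gtnNdvd.
Qed.

Lemma nz_mult (x : G p) m : x != 0 -> (0 < m < p)%N -> x *+ m != 0.
Proof.
move=> x0 hm; have cm := cop_small hm.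
have p20 : (0 < p ^ 2)%N by rewrite expn_gt0 prime_gt0.
have [a _] := Bezoutl m p20.
rewrite coprime_sym in cm; rewrite (eqP cm) => /dvdnP[k hk].
apply: contra x0 => /eqP xm; apply/eqP.
have : x *+ (1 + a * m) = 0 by rewrite hk mulrnA xp2.
by rewrite mulrnDr mulnC mulrnA xm mul0rn addr0.
Qed.

Lemma pigeon (B : {set G p}) (x : G p) : x != 0 -> (p ^ 2 < #|B|)%N ->
  exists b c, [/\ b \in B, c \in B, b != c & exists2 m, (0 < m < p)%N & b - c = x *+ m].
Proof.
move=> x0 hB; case: (classic (exists b c, [/\ b \in B, c \in B, b != c &
   exists2 m, (0 < m < p)%N & b - c = x *+ m])) => // H; exfalso.
pose f := fun u : G p * 'I_p => u.1 + x *+ u.2.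
pose D := setX B [set: 'I_p].
have inj : {in D &, injective f}.
  move=> [b j] [c k]; rewrite !inE /= !andbT => bB cB.
  wlog jk : b c j k bB cB / (j <= k)%N.
    move=> W e; case: (leqP j k) => h; first exact: W.
    by symmetry; apply: W => //; rewrite ?(ltnW h) ?e.
  rewrite /f /= => e.
  have ek : x *+ k = x *+ j + x *+ (k - j) by rewrite -mulrnDr subnKC.
  rewrite ek addrA addrAC in e; move/addIr: e => e.
  have [jk'|jk'] := eqVneq (k - j)%N 0%N.
    have jeq : j = k by apply: val_inj; apply/eqP; rewrite eqn_leq jk /= -subn_eq0 jk'.
    by move: e; rewrite jk' mulr0n addr0 => ->; rewrite jeq.
  have hm : (0 < k - j < p)%N.
    by rewrite lt0n jk' /=; have := ltn_ord k; lia.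
  have [bc|bc] := eqVneq b c.
    by move: e; rewrite bc -{1}(addr0 c) => /(addrI c) /esym/eqP; rewrite (negbTE (nz_mult x0 hm)).
  by case: H; exists b, c; split => //; exists (k - j)%N => //; rewrite e addrAC subrr add0r.
have := card_in_imset inj; rewrite cardsX cardsT card_ord => hc.
have : (#|f @: D| <= #|G p|)%N by apply: max_card.
rewrite hc card_prod !card_ord ZC1 ZC2.
move: hB; rewrite -mulnn => hB hle.
have := p_gt1; nia.
Qed.


Lemma dim_le (A B : {set G p}) :
  (forall f : G p -> algC, exists c : G p -> algC,
     forall a, a \in A -> f a = \sum_(b in B) c b * chi b a) -> (#|A| <= #|B|)%N.
Proof.
move=> span.
pose M := \matrix_(i < #|B|, j < #|A|) chi (enum_val i) (enum_val j).
have : row_full M.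
  rewrite -sub1mx; apply/row_subP => j; apply/submxP.
  have [c Hc] := span (fun a => (a == enum_val j)%:R).
  exists (\row_i c (enum_val i)).
  apply/rowP => k; rewrite !mxE -(inj_eq enum_val_inj) eq_sym.
  rewrite (Hc _ (enum_valP k)) big_enum_val; apply: eq_bigr => i _; rewrite !mxE //.
rewrite /row_full => /eqP <-; exact: rank_leq_row.
Qed.

Lemma geom (w : algC) n : w ^+ n = 1 -> w != 1 -> \sum_(i < n) w ^+ i = 0.
Proof.
move=> wn w1; have := subrX1 w n; rewrite wn subrr => /esym/eqP.
by rewrite mulf_eq0 subr_eq0 (negbTE w1) /= => /eqP.
Qed.

Lemma ltZ2 (y : 'Z_p) : (y < p)%N.
Proof. by case: y => y /=; rewrite ZC2. Qed.
Lemma ltZ1 (y : 'Z_(p ^ 2)) : (y < p ^ 2)%N.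
Proof. by case: y => y /=; rewrite ZC1. Qed.
Lemma geo2 k : omega p ^+ (p * k) ^+ (Zp_trunc p).+2 = 1.
Proof. by rewrite ZC2 -exprM mulnAC mulnn exprM omega_pow expr1n. Qed.
Lemma geo1 k : omega p ^+ k ^+ (Zp_trunc (p ^ 2)).+2 = 1.
Proof. by rewrite ZC1 -exprM mulnC exprM omega_pow expr1n. Qed.

Lemma dvd_p2 k : (p ^ 2 %| p * k)%N = (p %| k)%N.
Proof. by rewrite -mulnn dvdn_pmul2l ?prime_gt0. Qed.

Lemma sumchi (prim : (p ^ 2).-primitive_root (omega p)) (z : G p) :
  z != 0 -> \sum_(x : G p) chi x z = 0.
Proof.
move=> zn0.
have e : forall x : G p, chi x z =
    (omega p ^+ z.1) ^+ x.1 * (omega p ^+ (p * z.2)) ^+ x.2.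
  move=> x; rewrite chiC /chi exprD -!(exprM (omega p)).
  congr (_ * _); congr (_ ^+ _); first exact: mulnC.
  by rewrite mulnCA mulnC.
rewrite (eq_bigr _ (fun x _ => e x)).
rewrite -(pair_bigA _ (fun (i : 'Z_(p ^ 2)) (j : 'Z_p) => (omega p ^+ z.1) ^+ i * (omega p ^+ (p * z.2)) ^+ j)) /=.
rewrite -big_distrlr /=.
have [z10|z1n0] := eqVneq z.1 0.
  have z2n0 : z.2 != 0.
    apply: contra zn0 => /eqP z20; apply/eqP.
    by clear e; case: z z10 z20 => z1 z2 /= -> ->.
  rewrite [X in _ * X]geom ?mulr0 //.
    exact: geo2.
  rewrite -(prim_order_dvd prim) dvd_p2 //.
  rewrite gtnNdvd //; first by rewrite lt0n.
  exact: ltZ2.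
rewrite [X in X * _]geom ?mul0r //.
  exact: geo1.
rewrite -(prim_order_dvd prim) gtnNdvd //; first by rewrite lt0n.
exact: ltZ1.
Qed.

Lemma final (A : {set G p}) :
  (forall x, x != 0 -> Fh A x = 0) -> (0 < #|A|)%N -> A = setT.
Proof.
move=> HF A0.
have p20 : (0 < p ^ 2)%N by rewrite expn_gt0 prime_gt0.
have FA0 : Fh A 0 = #|A|%:R.
  by rewrite /Fh (eq_bigr (fun _ => 1)) ?sumr_const // => a _; rewrite chi0.
have An0 : (#|A|%:R : algC) != 0 by rewrite pnatr_eq0 -lt0n.
have wp : omega p ^+ p != 1.
  apply/negP => /eqP wp.
  pose x0 : G p := (p%:R, 0).
  have x01 : nat_of_ord x0.1 = p.
    by rewrite /= val_Zp_nat ?p2_gt1 // modn_small // -mulnn ltn_Pmull ?p_gt1 ?prime_gt0.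
  have x0n : x0 != 0.
    apply/negP => /eqP /(congr1 (fun u : G p => nat_of_ord u.1)).
    rewrite x01 /= => p0; move: (prime_gt0 pp); rewrite p0.
    by [].
  have : Fh A x0 = #|A|%:R.
    rewrite /Fh (eq_bigr (fun _ => 1)) ?sumr_const // => a _; rewrite /chi.
    by rewrite x01 /= !muln0 addn0 mulnC exprM wp expr1n.
  by rewrite HF // => /esym/eqP; rewrite (negbTE An0).
have prim : (p ^ 2).-primitive_root (omega p).
  have [m pm md] := prim_order_exists p20 omega_pow.
  case/(dvdn_pfactor _ _ pp): md => k k2 mk.
  have : (k == 2)%N || (k <= 1)%N by lia.
  case/orP => [/eqP k2'|k1]; first by rewrite mk k2' in pm.
  move: wp; rewrite -(prim_order_dvd pm) mk.
  by rewrite -{2}(expn1 p) dvdn_exp2l.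
apply/setP => y; rewrite in_setT.
case: (boolP (y \in A)) => // yA; exfalso.
have S1 : \sum_(x : G p) Fh A x * chi x (- y) = #|A|%:R.
  rewrite (bigD1 (0 : G p)) //= FA0 chi0 mulr1 big1 ?addr0 // => x xn0.
  by rewrite HF // mul0r.
have S0 : \sum_(x : G p) Fh A x * chi x (- y) = 0.
  rewrite (eq_bigr (fun x => \sum_(a in A) chi x (a - y))); last first.
    move=> x _; rewrite /Fh mulr_suml; apply: eq_bigr => a _.
    by rewrite chiDr.
  rewrite exchange_big /= big1 // => a aA.
  apply: (sumchi prim); apply/negP => /eqP/subr0_eq ay.
  by move: yA; rewrite -ay aA.
by move: An0; rewrite -S1 S0 eqxx.
Qed.
End Basics.

Theorem lemma5p2 (p : nat) (A : {set G p}) :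
  prime p -> spectral A -> (p ^ 2 < #|A|)%N -> A = [set: G p].
Proof.
move=> pp [B [orth [_ span]]] hA.
have hB : (p ^ 2 < #|B|)%N := leq_trans hA (dim_le span).
apply: (final pp) => [x xn0|]; last exact: leq_ltn_trans (leq0n _) hA.
have [b [c [bB cB bc [m hm e]]]] := pigeon pp xn0 hB.
apply: (galois pp (cop_small pp hm)).
by rewrite -e -(inprodE pp); apply: orth.
Qed.
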